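(* Let $p\ge2$, $c\in\mathbb R^d$ and $\lambda_1,\dots,\lambda_d>0$. Then the function $H(y)=-\sum_{i=1}^dy_i^{1/p}|c_i|-\sqrt{\sum_{i=1}^d\lambda_i^{-1}y_i^{2/p}}$ is convex on $\mathbb R_+^d$. *)

(* Defs.v *)
From mathcomp Require Import all_boot all_order all_algebra.
From mathcomp Require Import all_classical all_reals all_analysis.
Set Implicit Arguments. Unset Strict Implicit. Unset Printing Implicit Defensive.
Import Order.TTheory GRing.Theory Num.Theory.
Local Open Scope ring_scope.

Definition nonneg_orthant (R : realType) (d : nat) (y : 'I_d -> R) : Prop :=
  forall i, 0 <= y i.

Definition convex_on (R : realType) (d : nat) (D : ('I_d -> R) -> Prop)
  (f : ('I_d -> R) -> R) : Prop :=
  forall (y z : 'I_d -> R) (t : R), D y -> D z -> 0 <= t -> t <= 1 ->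
    f (fun i => t * y i + (1 - t) * z i) <= t * f y + (1 - t) * f z.

Definition Hfun (R : realType) (d : nat) (p : R) (c lam : 'I_d -> R)
  (y : 'I_d -> R) : R :=
  - (\sum_(i < d) (y i `^ (1 / p)) * `|c i|)
  - Num.sqrt (\sum_(i < d) (lam i)^-1 * (y i `^ (2 / p))).

(* Main.v *)
Require Import Defs.
From mathcomp Require Import all_boot all_order all_algebra.
From mathcomp Require Import all_classical all_reals all_analysis.
From mathcomp Require Import lra.
Import Order.TTheory GRing.Theory Num.Theory.
Local Open Scope ring_scope.

Lemma concave_powR_aux (R : realType) (r : R) : 0 < r -> r <= 1 ->
  forall x w t : R, 0 <= x -> 0 <= w -> 0 <= t -> t <= 1 ->
  t * x `^ r + (1 - t) * w `^ r <= (t * x + (1 - t) * w) `^ r.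
Proof.
move=> r0 r1 x w t x0 w0 t0 t1.
have P1 : 1 <= r^-1 by rewrite invf_ge1.
have := @convex_powR R _ P1 (Itv01 t0 t1) (x `^ r) (w `^ r).
rewrite !inE /= !in_itv /= !powR_ge0 => /(_ isT isT).
rewrite !convRE /= -!powRrM !mulfV ?gt_eqF // !powRr1 // => h.
have {}h : (t * x `^ r + (1 - t) * w `^ r) `^ r^-1 <= t * x + (1 - t) * w := h.
have L0 : 0 <= t * x `^ r + (1 - t) * w `^ r.
  by rewrite addr_ge0 // mulr_ge0 // ?powR_ge0 // subr_ge0.
have -> : t * x `^ r + (1 - t) * w `^ r = ((t * x `^ r + (1 - t) * w `^ r) `^ r^-1) `^ r.
  by rewrite -powRrM mulVf ?powRr1 // gt_eqF.
apply: ge0_ler_powR => //; first exact: ltW.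
  by rewrite nnegrE powR_ge0.
by rewrite nnegrE addr_ge0 // mulr_ge0 // subr_ge0.
Qed.

Lemma concave_sqrt_aux {R : realType} {a b t : R} : 0 <= a -> 0 <= b -> 0 <= t -> t <= 1 ->
  t * Num.sqrt a + (1 - t) * Num.sqrt b <= Num.sqrt (t * a + (1 - t) * b).
Proof.
move=> a0 b0 t0 t1.
have sa := sqrtr_ge0 a; have sb := sqrtr_ge0 b.
have L0 : 0 <= t * Num.sqrt a + (1 - t) * Num.sqrt b.
  by rewrite addr_ge0 // mulr_ge0 // subr_ge0.
rewrite -(ger0_norm L0) -sqrtr_sqr ler_sqrt; last first.
  by rewrite addr_ge0 // mulr_ge0 // subr_ge0.
rewrite -{2}(sqr_sqrtr a0) -{2}(sqr_sqrtr b0).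
have t1' : 0 <= 1 - t by rewrite subr_ge0.
move: (Num.sqrt a) (Num.sqrt b) => u v.
have := mulr_ge0 (mulr_ge0 t0 t1') (sqr_ge0 (u - v)) => h.
nra.
Qed.

Theorem proposition9 (R : realType) (d : nat) (p : R) (c lam : 'I_d -> R)
  (hp : 2 <= p) (hlam : forall i, 0 < lam i) :
  convex_on (@nonneg_orthant R d) (Hfun p c lam).
Proof.
move=> y z t hy hz t0 t1; rewrite /Hfun.
have p0 : 0 < p by apply: lt_le_trans hp.
have r1 : 0 < 1 / p by rewrite divr_gt0.
have r1' : 1 / p <= 1 by rewrite ler_pdivrMr // mul1r (le_trans _ hp) // ler1n.
have r2 : 0 < 2 / p by rewrite divr_gt0.
have r2' : 2 / p <= 1 by rewrite ler_pdivrMr // mul1r.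
have t1' : 0 <= 1 - t by rewrite subr_ge0.
set S1 := fun y : 'I_d -> R => \sum_(i < d) y i `^ (1 / p) * `|c i|.
set A := fun y : 'I_d -> R => \sum_(i < d) (lam i)^-1 * y i `^ (2 / p).
have A0 : forall y, 0 <= A y.
  move=> w; apply: sumr_ge0 => i _; apply: mulr_ge0; last exact: powR_ge0.
  by rewrite invr_ge0 ltW.
have h1 : t * S1 y + (1 - t) * S1 z <= S1 (fun i => t * y i + (1 - t) * z i).
  rewrite /S1 !mulr_sumr -big_split /=; apply: ler_sum => i _.
  rewrite !mulrA -mulrDl; apply: ler_wpM2r => //.
  exact: concave_powR_aux.
have h2 : t * A y + (1 - t) * A z <= A (fun i => t * y i + (1 - t) * z i).
  rewrite /A !mulr_sumr -big_split /=; apply: ler_sum => i _.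
  rewrite !mulrA ![_ * (lam i)^-1]mulrC -!mulrA -mulrDr; apply: ler_wpM2l.
    by rewrite invr_ge0 ltW.
  exact: concave_powR_aux.
have h3 : t * Num.sqrt (A y) + (1 - t) * Num.sqrt (A z)
    <= Num.sqrt (A (fun i => t * y i + (1 - t) * z i)).
  have := concave_sqrt_aux (A0 y) (A0 z) t0 t1 => hh.
  apply: (le_trans hh).
  by rewrite ler_sqrt.
rewrite -/(S1 _) -/(S1 y) -/(S1 z) -/(A _) -/(A y) -/(A z).
lra.
Qed.
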